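(* Consider Algorithm 3 (described in the context) under the Standing Assumption, Matrix Assumption, Gradient Assumption and the event $E_{\tau,small}$ assumption of the context. Then for all $k\ge\bar k_{\tau,\xi}$, $$\mathbb{E}_{k,\tau,small}[\Delta q(x_k,\bar\tau_k,\bar g_k,H_k,\bar d_k)]\le\Delta q(x_k,\bar\tau_{\min},g_k,H_k,d_k)+\bar\tau_{\min}\zeta^{-1}M.$$
   Context: Problem: $\min_x f(x)$ s.t. $c(x)=0$, $f(x)=\mathbb{E}[F(x,\omega)]$, $c:\mathbb{R}^n\to\mathbb{R}^m$ deterministic. Notation: $g_k=\nabla f(x_k)$, $c_k=c(x_k)$, $J_k=\nabla c(x_k)^T$; $\Delta q(x,\tau,g,H,d)=-\tau(g^Td+\frac12\max\{d^THd,0\})+\|c(x)\|_1$. Standing Assumption: an open convex set $\mathcal X$ contains all iterates; $f$ is $C^1$, bounded below on $\mathcal X$, $\nabla f$ bounded and $L$-Lipschitz on $\mathcal X$; $c$, $\nabla c^T$ bounded on $\mathcal X$; $\nabla c_i$ is $\gamma_i$-Lipschitz on $\mathcal X$; singular values of $\nabla c(x)^T$ bounded away from zero uniformly over $\mathcal X$; $\Gamma:=\sum_i\gamma_i$. Matrix Assumption: deterministic symmetric $H_k$, chosen independently of the stochastic gradients, with $\|H_k\|_2\le\kappa_H$ and $u^TH_ku\ge\zeta\|u\|_2^2$ whenever $J_ku=0$. Algorithm 3 (inputs $x_0$, $\bar\tau_{-1}>0$, $\epsilon,\sigma\in(0,1)$, $\bar\xi_{-1}>0$, $\{\beta_k\}\subset(0,1]$,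 $\theta\ge0$): at iteration $k$, obtain stochastic gradient $\bar g_k$; $(\bar d_k,\bar y_k)$ solves $H_k\bar d_k+J_k^T\bar y_k=-\bar g_k$, $J_k\bar d_k=-c_k$ (assumed $\bar d_k\neq0$). $\bar\tau_k^{trial}=\infty$ if $\bar g_k^T\bar d_k+\max\{\bar d_k^TH_k\bar d_k,0\}\le0$, else $\frac{(1-\sigma)\|c_k\|_1}{\bar g_k^T\bar d_k+\max\{\bar d_k^TH_k\bar d_k,0\}}$; $\bar\tau_k=\bar\tau_{k-1}$ if $\bar\tau_{k-1}\le\bar\tau_k^{trial}$, else $(1-\epsilon)\bar\tau_k^{trial}$. $\bar\xi_k^{trial}=\frac{\Delta q(x_k,\bar\tau_k,\bar g_k,H_k,\bar d_k)}{\bar\tau_k\|\bar d_k\|_2^2}$; $\bar\xi_k=\bar\xi_{k-1}$ if $\bar\xi_{k-1}\le\bar\xi_k^{trial}$, else $(1-\epsilon)\bar\xi_k^{trial}$. With $D_k=(\bar\tau_kL+\Gamma)\|\bar d_k\|_2^2$, $\hat a_k=\beta_k\Delta q(x_k,\bar\tau_k,\bar g_k,H_k,\bar d_k)/D_k$, $\tilde a_k=\hat a_k-4\|c_k\|_1/D_k$, project both onto $[a_k,a_k+\theta\beta_k^2]$ with $a_k=\frac{\beta_k\bar\xi_k\bar\tau_k}{\bar\tau_kL+\Gamma}$ to get $\widehat\alpha_k,\widetilde\alpha_k$; $\bar\alpha_k=\widehat\alpha_k$ if $\widehat\alpha_k<1$, $1$ if $\widetilde\alpha_k\le1\le\widehat\alpha_k$,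 $\widetilde\alpha_k$ if $\widetilde\alpha_k>1$; $x_{k+1}=x_k+\bar\alpha_k\bar d_k$. $\bar\xi_{\min}$ denotes the limit of the nonincreasing positive sequence $\{\bar\xi_k\}$. Gradient Assumption: $\mathbb{E}_k[\bar g_k]=g_k$, $\mathbb{E}_k[\|\bar g_k-g_k\|_2^2]\le M$, with $\mathbb{E}_k$ conditioned on reaching $x_k$ at iteration $k$. Deterministic counterparts: $(d_k,y_k)$ solves $H_kd_k+J_k^Ty_k=-g_k$, $J_kd_k=-c_k$; $\tau_k^{trial}=\infty$ if $g_k^Td_k+\max\{d_k^TH_kd_k,0\}\le0$, else $\frac{(1-\sigma)\|c_k\|_1}{g_k^Td_k+\max\{d_k^TH_kd_k,0\}}$. Event $E_{\tau,small}$ assumption: there exist $\bar k_{\tau,\xi}\in\mathbb{N}$ and $\bar\tau_{\min}>0$ with $\bar\tau_k=\bar\tau_{\min}\le\tau_k^{trial}$ and $\bar\xi_k=\bar\xi_{\min}$ for all $k\ge\bar k_{\tau,\xi}$; moreover for $k\ge\bar k_{\tau,\xi}$, $\mathbb{E}_{k,\tau,small}[\bar g_k]=g_k$ and $\mathbb{E}_{k,\tau,small}[\|\bar g_k-g_k\|_2^2]\le M$, where $\mathbb{E}_{k,\tau,small}$ is expectation w.r.t. $\omega$ conditioned on this event and on the algorithm having reached $x_k$ at iteration $k$. *)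

(* Defs.v *)
From HB Require Import structures.
From mathcomp Require Import all_boot all_order all_algebra.
From mathcomp Require Import all_classical all_reals all_analysis.
Set Implicit Arguments. Unset Strict Implicit. Unset Printing Implicit Defensive.
Import Order.TTheory GRing.Theory Num.Theory.
Local Open Scope ring_scope.

Section Defs.
Variable R : realType.

Definition dot (n : nat) (u v : 'cV[R]_n) : R := (u^T *m v) 0 0.
Definition sqnorm (n : nat) (u : 'cV[R]_n) : R := dot u u.
Definition norm1 (m : nat) (u : 'cV[R]_m) : R := \sum_i `|u i 0|.
Definition quad (n : nat) (H : 'M[R]_n) (d : 'cV[R]_n) : R := dot d (H *m d).

(* Delta q(x, tau, g, H, d) = -tau (g^T d + 1/2 max{d^T H d, 0}) + ||c(x)||_1,
   where cx stands for c(x). *)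
Definition Dq (n m : nat) (cx : 'cV[R]_m) (tau : R) (g : 'cV[R]_n)
    (H : 'M[R]_n) (d : 'cV[R]_n) : R :=
  - tau * (dot g d + 2^-1 * Num.max (quad H d) 0) + norm1 cx.

(* denominator g^T d + max{d^T H d, 0} of the merit parameter trial value *)
Definition tau_den (n : nat) (g : 'cV[R]_n) (H : 'M[R]_n) (d : 'cV[R]_n) : R :=
  dot g d + Num.max (quad H d) 0.

(* "tau <= tau^trial", where tau^trial = +oo if the denominator is <= 0,
   and (1 - sigma) ||c||_1 / den otherwise *)
Definition le_tau_trial (n m : nat) (sigma tau : R) (cx : 'cV[R]_m)
    (g : 'cV[R]_n) (H : 'M[R]_n) (d : 'cV[R]_n) : Prop :=
  tau_den g H d <= 0 \/ tau <= (1 - sigma) * norm1 cx / tau_den g H d.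

Definition tau_update (n m : nat) (eps sigma tau_prev : R) (cx : 'cV[R]_m)
    (g : 'cV[R]_n) (H : 'M[R]_n) (d : 'cV[R]_n) : R :=
  if tau_den g H d <= 0 then tau_prev
  else let tr := (1 - sigma) * norm1 cx / tau_den g H d in
       if tau_prev <= tr then tau_prev else (1 - eps) * tr.

Definition xi_update (n m : nat) (eps xi_prev tau : R) (cx : 'cV[R]_m)
    (g : 'cV[R]_n) (H : 'M[R]_n) (d : 'cV[R]_n) : R :=
  let tr := Dq cx tau g H d / (tau * sqnorm d) in
  if xi_prev <= tr then xi_prev else (1 - eps) * tr.

End Defs.

(* Main.v *)
Require Import Defs.
From HB Require Import structures.
From mathcomp Require Import all_boot all_order all_algebra.
From mathcomp Require Import all_classical all_reals all_analysis.
From mathcomp Require Import ring lra.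
Import Order.TTheory GRing.Theory Num.Theory.
Local Open Scope ring_scope.

Section LA.
Set Implicit Arguments. Unset Strict Implicit.
Variable R : realType.

Lemma dot_sum n (u v : 'cV[R]_n) : dot u v = \sum_i u i 0 * v i 0.
Proof. by rewrite /dot mxE; apply: eq_bigr => i _; rewrite mxE. Qed.

Lemma dotC n (u v : 'cV[R]_n) : dot u v = dot v u.
Proof. by rewrite !dot_sum; apply: eq_bigr => i _; rewrite mulrC. Qed.

Lemma dotDl n (u v w : 'cV[R]_n) : dot (u + v) w = dot u w + dot v w.
Proof. by rewrite !dot_sum -big_split; apply: eq_bigr => i _; rewrite !mxE mulrDl. Qed.

Lemma dotNl n (u w : 'cV[R]_n) : dot (- u) w = - dot u w.
Proof. by rewrite !dot_sum -sumrN; apply: eq_bigr => i _; rewrite !mxE mulNr. Qed.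

Lemma dotDr n (u v w : 'cV[R]_n) : dot w (u + v) = dot w u + dot w v.
Proof. by rewrite ![dot w _]dotC dotDl. Qed.

Lemma dotNr n (u w : 'cV[R]_n) : dot w (- u) = - dot w u.
Proof. by rewrite ![dot w _]dotC dotNl. Qed.

Lemma dot0r n (w : 'cV[R]_n) : dot w 0 = 0.
Proof. by rewrite dot_sum big1 // => i _; rewrite mxE mulr0. Qed.

Lemma dot0l n (w : 'cV[R]_n) : dot 0 w = 0.
Proof. by rewrite dotC dot0r. Qed.

Lemma dot_tr p q (A : 'M[R]_(p, q)) (u : 'cV[R]_p) (v : 'cV[R]_q) :
  dot u (A *m v) = dot (A^T *m u) v.
Proof. by rewrite /dot trmx_mul trmxK mulmxA. Qed.

Lemma sqnorm_ge0 n (u : 'cV[R]_n) : 0 <= sqnorm u.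
Proof. by rewrite /sqnorm dot_sum; apply: sumr_ge0 => i _; by rewrite -expr2 sqr_ge0. Qed.

Lemma sqnorm_le0 n (u : 'cV[R]_n) : sqnorm u <= 0 -> u = 0.
Proof.
move=> h; have h0 : sqnorm u = 0 by apply/eqP; rewrite eq_le h sqnorm_ge0.
move: h0; rewrite /sqnorm dot_sum => /psumr_eq0P h1.
apply/matrixP => i j; rewrite (ord1 j) mxE.
have := h1 (fun k _ => ltac:(by rewrite -expr2 sqr_ge0)) i isT.
by rewrite -expr2 => /eqP; rewrite sqrf_eq0 => /eqP ->.
Qed.

Lemma cs_aux n (u e : 'cV[R]_n) z :
  0 <= z ^+ 2 * sqnorm u + 2 * z * dot u e + sqnorm e.
Proof.
have := sqnorm_ge0 (z *: u + e).
rewrite /sqnorm !dot_sum !mulr_sumr -!big_split /=.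
congr (_ <= _); apply: eq_bigr => i _; rewrite !mxE; ring.
Qed.

Lemma kkt_solve n m (H : 'M[R]_n) (J : 'M[R]_(m, n)) zeta (r : 'cV[R]_n) :
  H^T = H -> 0 < zeta -> \rank J = m ->
  (forall u, J *m u = 0 -> zeta * sqnorm u <= quad H u) ->
  exists p q, H *m p + J^T *m q = r /\ J *m p = 0.
Proof.
move=> HT z0 rJ pd.
pose K := block_mx H J^T J (0 : 'M[R]_(m, m)).
have uK : K \in unitmx.
  rewrite -row_free_unit; apply: inj_row_free => v vK.
  move: vK; rewrite -(hsubmxK v) mul_row_block mulmx0 addr0 -row_mx0.
  move=> /eq_row_mx [h1 h2].
  set a := lsubmx v in h1 h2 *; set b := rsubmx v in h1 h2 *.
  have Ja : J *m a^T = 0 by rewrite -(trmxK (J *m a^T)) trmx_mul trmxK h2 trmx0.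
  have Ha : H *m a^T = - (J^T *m b^T).
    have : (a *m H + b *m J)^T = 0 by rewrite h1 trmx0.
    rewrite linearD /= !trmx_mul HT => /eqP; rewrite addr_eq0 => /eqP ->.
    by [].
  have : zeta * sqnorm a^T <= 0.
    apply: le_trans (pd _ Ja) _; rewrite /quad Ha dotNr dot_tr trmxK Ja dot0l oppr0.
    by [].
  rewrite pmulr_rle0 // => /sqnorm_le0 a0.
  have a0' : a = 0 by rewrite -(trmxK a) a0 trmx0.
  have rfJ : row_free J by rewrite /row_free rJ.
  have b0 : b = 0.
    by apply/eqP; rewrite -(mulmx_free_eq0 _ rfJ) -h1 a0' mul0mx add0r.
  by rewrite a0' b0 row_mx0.
exists (usubmx (invmx K *m col_mx r 0)), (dsubmx (invmx K *m col_mx r 0)).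
have h := mulKVmx uK (col_mx r 0).
rewrite -[invmx K *m _]vsubmxK mul_block_col mul0mx addr0 in h.
by case: (eq_col_mx h).
Qed.
End LA.
Lemma le_integral_nm (R : realType) (d0 : measure_display) (T : measurableType d0)
  (mu : {measure set T -> \bar R}) (F G : T -> \bar R) :
  (forall x, (F x <= G x)%E) ->
  (\int[mu]_x F x <= \int[mu]_x G x)%E.
Proof.
move=> FG.
rewrite /integral !patch_setT.
apply: leeB; apply: ereal_sup_le => _ [h /= hF <-]; exists h => //= x.
- apply: le_trans (hF x) _; apply: (@funepos_le _ _ setT) => [y _|]; [exact: FG|exact: in_setT].
- apply: le_trans (hF x) _; apply: (@funeneg_le _ _ setT) => [y _|]; [exact: FG|exact: in_setT].
Qed.

Lemma int_bound (R : realType) (d0 : measure_display) (T : measurableType d0)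
  (P : probability T R) n (gbar : T -> 'cV[R]_n) (gk a : 'cV[R]_n) (F : T -> R)
  (C0 t t2 M : R) :
  0 <= t2 ->
  (forall i : 'I_n, measurable_fun setT (fun w => gbar w i 0)) ->
  (forall i : 'I_n, P.-integrable setT (fun w => (gbar w i 0)%:E)) ->
  (forall i : 'I_n, (\int[P]_w (gbar w i 0)%:E = (gk i 0)%:E)%E) ->
  (\int[P]_w (sqnorm (gbar w - gk))%:E <= M%:E)%E ->
  (forall w, F w <= C0 - t * dot (gbar w - gk) a + t2 * sqnorm (gbar w - gk)) ->
  (\int[P]_w (F w)%:E <= (C0 + t2 * M)%:E)%E.
Proof.
move=> t20 mg ig Eg EM FG.
set s := fun w => sqnorm (gbar w - gk).
have sE w : s w = \sum_i (gbar w i 0 - gk i 0) ^+ 2.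
  by rewrite /s /sqnorm dot_sum; apply: eq_bigr => i _; rewrite !mxE expr2.
have ms : measurable_fun setT s.
  rewrite (_ : s = fun w => \sum_(i <- index_enum 'I_n) (gbar w i 0 - gk i 0) ^+ 2).
    apply: measurable_sum => i; rewrite (_ : (fun w => _) = (fun w => (gbar w i 0 - gk i 0) * (gbar w i 0 - gk i 0))); last by apply/funext => w; rewrite expr2.
    by apply: measurable_realfun.measurable_funM; apply: measurable_realfun.measurable_funB => //; exact: measurable_cst.
  by apply/funext => w; rewrite sE.
have s0 w : 0 <= s w by rewrite sE; apply: sumr_ge0 => i _; exact: sqr_ge0.
have is_ : P.-integrable setT (fun w => (s w)%:E).
  apply/integrableP; split; first exact/measurable_realfun.measurable_EFinP.
  under eq_integral do rewrite gee0_abs ?lee_fin//.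
  by apply: le_lt_trans EM _; exact: ltry.
have icst k : P.-integrable setT (fun w : T => k%:E).
  exact: (finite_measure_integrable_cst P k measurableT).
have ie i : P.-integrable setT (fun w => ((- t * a i 0)%:E * ((gbar w i 0)%:E - (gk i 0)%:E))%E).
  apply: (integrableZl measurableT); exact: (integrableB measurableT (ig i) (icst _)).
apply: (@le_trans _ _ (\int[P]_w ((C0)%:E + (\sum_i ((- t * a i 0)%:E * ((gbar w i 0)%:E - (gk i 0)%:E)))
     + (t2%:E * (s w)%:E)))%E).
  apply: le_integral_nm => w.
  rewrite sumEFin -!EFinM -!EFinD lee_fin.
  apply: (le_trans (FG w)); rewrite /s dot_sum mulr_sumr -sumrN.
  rewrite [X in _ <= C0 + X + _](eq_bigr (fun i => - (t * ((gbar w - gk) i 0 * a i 0)))) //.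
  by move=> i _; rewrite !mxE; ring.
have i1 : P.-integrable setT (fun w => (C0%:E + (\sum_i ((- t * a i 0)%:E * ((gbar w i 0)%:E - (gk i 0)%:E))))%E).
  by apply: (integrableD measurableT (icst _)); exact: (integrable_sum measurableT).
rewrite (integralD measurableT i1 (integrableZl measurableT t2 is_)).
rewrite (integralD measurableT (icst _) (integrable_sum measurableT (index_enum _) (fun i _ => ie i))).
rewrite (integral_sum measurableT ie).
rewrite (integralZl measurableT is_) (integral_cst P measurableT C0%:E).
have hP : ((P : {measure set T -> \bar R}) [set: T]%classic = 1)%E by exact: probability_setT.
rewrite hP mule1.
rewrite big1 ?adde0; last first.
  move=> i _; rewrite (integralZl measurableT (integrableB measurableT (ig i) (icst _))).
  rewrite (integralB measurableT (ig i) (icst _)).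
  by rewrite Eg (integral_cst P measurableT) hP mule1 subee // mule0.
by rewrite EFinD leeD2l // EFinM; apply: lee_wpmul2l => //; rewrite lee_fin.
Qed.

Lemma pointwise (R : realType) n m (H : 'M[R]_n) (J : 'M[R]_(m, n)) (zeta tau : R)
  (c : 'cV[R]_m) (g d gb db p : 'cV[R]_n) (y yb q : 'cV[R]_m) :
  H^T = H -> 0 < zeta -> 0 < tau ->
  (forall u : 'cV[R]_n, J *m u = 0 -> zeta * sqnorm u <= quad H u) ->
  H *m d + J^T *m y = - g -> J *m d = - c ->
  H *m db + J^T *m yb = - gb -> J *m db = - c ->
  H *m p + J^T *m q = - g -> J *m p = 0 ->
  Dq c tau gb H db <= Dq c tau g H d
     - tau * dot (gb - g) (if 0 <= quad H d then d else d + p)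
     + tau * zeta^-1 * sqnorm (gb - g).
Proof.
move=> HT z0 t0 pd hd hJd hdb hJdb hp hJp.
pose e := gb - g; have gbE : gb = g + e by rewrite /e addrC subrK.
pose u := db - d; have dbE : db = d + u by rewrite /u addrC subrK.
pose v := yb - y; have ybE : yb = y + v by rewrite /v addrC subrK.
clearbody e u v; subst gb db yb.
have -> : g + e - g = e by rewrite addrC addKr.
have Ju : J *m u = 0.
  move: hJdb; rewrite mulmxDr hJd; move: (J *m u) => X h.
  apply/matrixP => i j; move/matrixP: h => /(_ i j); rewrite !mxE; lra.
have Hu : H *m u = - e - J^T *m v.
  move: hdb hd; rewrite !mulmxDr.
  move: (H *m d) (H *m u) (J^T *m y) (J^T *m v) => X1 X2 X3 X4 h1 h2.
  apply/matrixP => i j; move/matrixP: h1 => /(_ i j); move/matrixP: h2 => /(_ i j).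
  rewrite !mxE; lra.
have Hd : H *m d = - g - J^T *m y.
  move: hd; move: (H *m d) (J^T *m y) => X1 X2 h1.
  apply/matrixP => i j; move/matrixP: h1 => /(_ i j); rewrite !mxE; lra.
have Hp : H *m p = - g - J^T *m q.
  move: hp; move: (H *m p) (J^T *m q) => X1 X2 h1.
  apply/matrixP => i j; move/matrixP: h1 => /(_ i j); rewrite !mxE; lra.
have dJ (w : 'cV[R]_n) (z : 'cV[R]_m) : dot w (J^T *m z) = dot (J *m w) z.
  by rewrite dot_tr trmxK.
have F2 : dot u (H *m d) = - dot g u.
  by rewrite Hd dotDr !dotNr dJ Ju dot0l oppr0 addr0 dotC.
have F3 : dot d (H *m u) = dot u (H *m d).
  by rewrite dot_tr HT dotC.
have F4 : dot u (H *m u) = - dot u e.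
  by rewrite Hu dotDr !dotNr dJ Ju dot0l oppr0 addr0.
have F5 : dot g u = dot e p.
  have : dot u (H *m p) = dot (H *m u) p by rewrite dot_tr HT.
  rewrite Hp Hu dotDr !dotNr dJ Ju dot0l oppr0 addr0.
  rewrite dotDl !dotNl [dot (J^T *m v) p]dotC dJ hJp dot0l oppr0 addr0.
  by rewrite [dot u g]dotC => /eqP; rewrite eqr_opp => /eqP.
have F6 := pd u Ju.
have F7 := cs_aux u e zeta.
have Q : quad H (d + u) = quad H d - 2 * dot g u + quad H u.
  rewrite /quad mulmxDr !dotDl !dotDr F3 F2; ring.
have D : dot (g + e) (d + u) = dot g d + dot g u + dot e d - quad H u.
  rewrite /quad F4 !dotDl !dotDr [dot u e]dotC; ring.
have Fz : zeta * quad H u <= sqnorm e.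
  rewrite /quad F4 in F6 *; rewrite [dot u e]dotC in F6 F7 *.
  have sq := sqnorm_ge0 u; nra.
have Fz2 : tau * quad H u <= tau * zeta^-1 * sqnorm e.
  rewrite -mulrA; apply: ler_wpM2l; first exact: ltW.
  rewrite -(ler_pM2l z0) mulrA mulfV ?mul1r //; last exact: lt0r_neq0.
have qu0 : 0 <= quad H u by apply: le_trans F6; apply: mulr_ge0; [exact: ltW|exact: sqnorm_ge0].
rewrite /Dq Q D.
set X := quad H d - 2 * dot g u + quad H u.
have m1 : X <= Num.max X 0 by rewrite le_max lexx.
have m2 : 0 <= Num.max X 0 by rewrite le_max lexx orbT.
case: ifP => hq.
- rewrite (max_idPl hq).
  have := ler_wpM2l (ltW t0) m1. rewrite /X; nra.
- have mq : Num.max (quad H d) 0 = 0.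
    apply/max_idPr; apply: ltW; rewrite ltNge hq //.
  rewrite mq.
  rewrite dotDr -F5.
  have := ler_wpM2l (ltW t0) m2. nra.
Qed.

Theorem lemma3p11
  (R : realType) (n m : nat)
  (* problem functions and the current iterate x_k *)
  (f : 'cV[R]_n -> R) (c : 'cV[R]_n -> 'cV[R]_m) (xk : 'cV[R]_n)
  (* deterministic quantities at iteration k *)
  (gk : 'cV[R]_n) (Jk : 'M[R]_(m, n)) (Hk : 'M[R]_n)
  (dk : 'cV[R]_n) (yk : 'cV[R]_m)
  (* algorithm parameters *)
  (eps sigma kappaH zeta M : R)
  (tau_prev tau_min xi_prev xi_min : R)
  (* conditional probability E_{k,tau,small} and the stochastic gradient *)
  (d0 : measure_display) (Omega : measurableType d0)
  (P : probability Omega R)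
  (gbar : Omega -> 'cV[R]_n) (dbar : Omega -> 'cV[R]_n) (ybar : Omega -> 'cV[R]_m) :
  (* Standing Assumption (at x_k): g_k = grad f(x_k), J_k = grad c(x_k)^T,
     J_k has full row rank *)
  (forall v : 'cV[R]_n, is_derive xk v f (dot gk v)) ->
  (forall v : 'cV[R]_n, is_derive xk v c (Jk *m v)) ->
  \rank Jk = m ->
  (* Matrix Assumption *)
  Hk^T = Hk ->
  0 < zeta ->
  (forall u : 'cV[R]_n, sqnorm (Hk *m u) <= kappaH ^+ 2 * sqnorm u) ->
  (forall u : 'cV[R]_n, Jk *m u = 0 -> zeta * sqnorm u <= quad Hk u) ->
  (* algorithm parameters *)
  0 < eps < 1 -> 0 < sigma < 1 -> 0 < tau_min ->
  (* deterministic search direction *)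
  Hk *m dk + Jk^T *m yk = - gk -> Jk *m dk = - c xk ->
  (* stochastic search direction (assumed nonzero) *)
  (forall w, Hk *m dbar w + Jk^T *m ybar w = - gbar w) ->
  (forall w, Jk *m dbar w = - c xk) ->
  (forall w, dbar w != 0) ->
  (* Gradient assumption, under the conditional expectation E_{k,tau,small} *)
  (forall i : 'I_n, measurable_fun setT (fun w => gbar w i 0)) ->
  (forall i : 'I_n, P.-integrable setT (fun w => (gbar w i 0)%:E)) ->
  (forall i : 'I_n, (\int[P]_w (gbar w i 0)%:E = (gk i 0)%:E)%E) ->
  (\int[P]_w (sqnorm (gbar w - gk))%:E <= M%:E)%E ->
  (* event E_{tau,small} at iteration k >= kbar_{tau,xi} *)
  (forall w, tau_update eps sigma tau_prev (c xk) (gbar w) Hk (dbar w) = tau_min) ->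
  le_tau_trial sigma tau_min (c xk) gk Hk dk ->
  (forall w, xi_update eps xi_prev tau_min (c xk) (gbar w) Hk (dbar w) = xi_min) ->
  (* conclusion *)
  (\int[P]_w (Dq (c xk) (tau_update eps sigma tau_prev (c xk) (gbar w) Hk (dbar w))
                 (gbar w) Hk (dbar w))%:E
   <= (Dq (c xk) tau_min gk Hk dk + tau_min * zeta^-1 * M)%:E)%E.
Proof.
move=> _ _ rJ HT z0 _ pd _ _ t0 hd hJd hdb hJdb _ mg ig Eg EM htau _ _.
have [p [q [hp hJp]]] := @kkt_solve R n m Hk Jk zeta (- gk) HT z0 rJ pd.
rewrite (_ : (fun w => _) = (fun w => (Dq (c xk) tau_min (gbar w) Hk (dbar w))%:E)); last first.
  by apply/funext => w; rewrite htau.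
apply: (int_bound (a := if 0 <= quad Hk dk then dk else dk + p) (t := tau_min)) => //.
- by apply: mulr_ge0; [exact: ltW|rewrite invr_ge0; exact: ltW].
- by move=> w; exact: (pointwise HT z0 t0 pd hd hJd (hdb w) (hJdb w) hp hJp).
Qed.
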